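(* Let $\alpha>0$ and $\kappa>0$ be given, and for $n\ge 0$ set $\rho_{\kappa n}=\max\bigl(\tfrac12,\,1-\tfrac{\kappa}{n+1}\bigr)$. Let $(\delta_{nj})_{n\ge 0,\,0\le j\le n}$ be a triangular family of real numbers with $\sup_{n,j}|\delta_{nj}|<\tfrac12$. For $n\ge 0$ and $|z|=1$ define $R_n(z)>0$ by \[ \Bigl|\prod_{j=0}^{n}\bigl(z-\rho_{\kappa n}e^{\frac{2\pi i (j+\alpha\delta_{nj})}{n+1}}\bigr)\Bigr| = R_n(z)\,\Bigl|\prod_{j=0}^{n}\bigl(z-\rho_{\kappa n}e^{\frac{2\pi i (j+\delta_{nj})}{n+1}}\bigr)\Bigr|^{\alpha}. \] Then there exist constants $0<c\le C<\infty$ such that $c\le R_n(z)\le C$ for all $z$ on the unit circle $\mathbb{T}$ and all $n\ge 0$. *)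

(* Defs.v *)
(* complex numbers modelled as R*R (points of the plane). *)
From Stdlib Require Import Reals Lra.
Open Scope R_scope.

Definition cdist (z w : R * R) : R :=
  sqrt ((fst z - fst w) ^ 2 + (snd z - snd w) ^ 2).

Definition cpolar (r theta : R) : R * R := (r * cos theta, r * sin theta).

(* prod_upto f n = f 0 * f 1 * ... * f n  (n+1 factors) *)
Fixpoint prod_upto (f : nat -> R) (n : nat) : R :=
  match n with
  | O => f O
  | S m => prod_upto f m * f (S m)
  end.

Definition rho (kappa : R) (n : nat) : R :=
  Rmax (1/2) (1 - kappa / (INR n + 1)).

Definition absprod (kappa a : R) (delta : nat -> nat -> R) (n : nat) (z : R * R) : R :=
  prod_upto (fun j => cdist z (cpolar (rho kappa n)
                 (2 * PI * (INR j + a * delta n j) / (INR n + 1)))) n.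

(* R_n(z) defined by |P_alpha| = R_n(z) |P_1|^alpha *)
Definition Rn (kappa alpha : R) (delta : nat -> nat -> R) (n : nat) (z : R * R) : R :=
  absprod kappa alpha delta n z / Rpower (absprod kappa 1 delta n z) alpha.

(* Main.v *)
Require Import Defs.
From Stdlib Require Import Reals.
From Stdlib Require Import Lra ClassicalEpsilon FunctionalExtensionality.
From HB Require Import structures.
From mathcomp Require Import all_boot all_algebra.
Open Scope R_scope.

Record cx := Cx { re : R; im : R }.

Definition cx_eqb (a b : cx) : bool :=
  if Req_EM_T (re a) (re b) then (if Req_EM_T (im a) (im b) then true else false) else false.
Lemma cx_eqP : Equality.axiom cx_eqb.
Proof.
move=> [a1 a2] [b1 b2]; rewrite /cx_eqb /=.
case: Req_EM_T => [h1|h]; last by constructor; case.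
case: Req_EM_T => [h2|h]; last by constructor; case.
by constructor; subst.
Qed.
HB.instance Definition _ := hasDecEq.Build cx cx_eqP.

Definition cx_find (P : pred cx) (n : nat) : option cx :=
  match excluded_middle_informative (exists x, P x) with
  | left h => Some (proj1_sig (constructive_indefinite_description _ h))
  | right _ => None end.
Lemma cx_find_correct P n x : cx_find P n = Some x -> P x.
Proof. rewrite /cx_find; case: excluded_middle_informative => // h [<-].
exact: (proj2_sig (constructive_indefinite_description _ h)). Qed.
Lemma cx_find_complete (P : pred cx) : (exists x, P x) -> exists n, cx_find P n.
Proof. move=> h; exists 0%nat; rewrite /cx_find; case: excluded_middle_informative => //. Qed.
Lemma cx_find_ext (P Q : pred cx) : P =1 Q -> cx_find P =1 cx_find Q.
Proof. move=> h; have e : P = Q by apply: functional_extensionality. by rewrite e. Qed.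
HB.instance Definition _ := hasChoice.Build cx cx_find_correct cx_find_complete cx_find_ext.

Definition cadd a b := Cx (re a + re b) (im a + im b).
Definition copp a := Cx (- re a) (- im a).
Definition czero := Cx 0 0.
Definition cmul a b := Cx (re a * re b - im a * im b) (re a * im b + im a * re b).
Definition cone := Cx 1 0.
Definition cinv a := Cx (re a / (re a ^ 2 + im a ^ 2)) (- im a / (re a ^ 2 + im a ^ 2)).

Lemma cxE (a b : cx) : re a = re b -> im a = im b -> a = b.
Proof. by case: a; case: b => /= ? ? ? ? -> ->. Qed.

Lemma caddA : associative cadd. Proof. move=> a b c; apply: cxE => /=; lra. Qed.
Lemma caddC : commutative cadd. Proof. move=> a b; apply: cxE => /=; lra. Qed.
Lemma cadd0 : left_id czero cadd. Proof. move=> a; apply: cxE => /=; lra. Qed.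
Lemma caddN : left_inverse czero copp cadd. Proof. move=> a; apply: cxE => /=; lra. Qed.
HB.instance Definition _ := GRing.isZmodule.Build cx caddA caddC cadd0 caddN.

Lemma cmulA : associative cmul. Proof. move=> a b c; apply: cxE => /=; ring. Qed.
Lemma cmulC : commutative cmul. Proof. move=> a b; apply: cxE => /=; ring. Qed.
Lemma cmul1 : left_id cone cmul. Proof. move=> a; apply: cxE => /=; ring. Qed.
Lemma cmulDl : left_distributive cmul cadd. Proof. move=> a b c; apply: cxE => /=; ring. Qed.
Lemma cone_neq0 : cone != czero.
Proof. apply/eqP => h; have := f_equal re h => /=; lra. Qed.
HB.instance Definition _ := GRing.Zmodule_isComNzRing.Build cx cmulA cmulC cmul1 cmulDl cone_neq0.

Lemma cmulV (x : cx) : x != 0%R -> cmul (cinv x) x = cone.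
Proof.
move=> hx; have h : re x ^ 2 + im x ^ 2 <> 0.
  move=> h0; move/eqP: hx; apply; apply: cxE => /=; nra.
apply: cxE => /=; field; rewrite -!Rsqr_pow2 in h; exact h.
Qed.
Lemma cinv0 : cinv czero = czero. Proof. apply: cxE => /=; rewrite /Rdiv; ring. Qed.
HB.instance Definition _ := GRing.ComNzRing_isField.Build cx cmulV cinv0.


Module CxTh.
Import GRing.Theory.

Lemma prod_identity (N : nat) (r z w : cx) : (N.-primitive_root w)%R -> r != 0%R ->
  (\prod_(0 <= i < N) (z - r * w ^+ i) = z ^+ N - r ^+ N)%R.
Proof.
move=> prim r0.
have e i : (z - r * w ^+ i = r * (z / r - w ^+ i))%R.
  by rewrite mulrBr [(r * (z / r))%R]mulrC divfK.
rewrite (eq_bigr _ (fun i _ => e i)) big_split /= prodr_const_nat subn0.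
have := factor_Xn_sub_1 prim; move/(congr1 (fun p => p.[z / r]%R)).
rewrite horner_prod; under eq_bigr do rewrite hornerXsubC.
rewrite !hornerE => ->.
by rewrite mulrBr mulr1 -exprMn (mulrC r) divfK.
Qed.

Definition cexp (t : R) := Cx (cos t) (sin t).
Definition nrm2 (a : cx) := re a ^ 2 + im a ^ 2.

Lemma re_add (a b : cx) : re (a + b)%R = re a + re b. Proof. by []. Qed.
Lemma im_add (a b : cx) : im (a + b)%R = im a + im b. Proof. by []. Qed.
Lemma re_opp (a : cx) : re (- a)%R = - re a. Proof. by []. Qed.
Lemma im_opp (a : cx) : im (- a)%R = - im a. Proof. by []. Qed.
Lemma re_mul (a b : cx) : re (a * b)%R = re a * re b - im a * im b. Proof. by []. Qed.
Lemma im_mul (a b : cx) : im (a * b)%R = re a * im b + im a * re b. Proof. by []. Qed.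
Lemma re_one : re (1%R : cx) = 1. Proof. by []. Qed.
Lemma im_one : im (1%R : cx) = 0. Proof. by []. Qed.
Lemma re_zero : re (0%R : cx) = 0. Proof. by []. Qed.
Lemma im_zero : im (0%R : cx) = 0. Proof. by []. Qed.
Definition cxsimp := (re_add, im_add, re_opp, im_opp, re_mul, im_mul, re_one, im_one, re_zero, im_zero).

Lemma cexp_add a b : (cexp a * cexp b)%R = cexp (a + b).
Proof. apply: cxE; rewrite !cxsimp /= ?cos_plus ?sin_plus; ring. Qed.

Lemma cexp_pow a k : ((cexp a) ^+ k)%R = cexp (INR k * a).
Proof.
elim: k => [|k IH]; first by apply: cxE; rewrite /= ?Rmult_0_l ?cos_0 ?sin_0.
rewrite exprS IH cexp_add; congr cexp; rewrite S_INR; ring.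
Qed.

Lemma cos_lt1 t : 0 < t < 2 * PI -> cos t < 1.
Proof.
move=> [h1 h2]; have -> : t = 2 * (t / 2) by field.
rewrite cos_2a_sin; have : 0 < sin (t/2) by apply: sin_gt_0; lra.
nra.
Qed.

Lemma omega_prim (n : nat) : ((n.+1).-primitive_root (cexp (2 * PI / (INR n + 1))))%R.
Proof.
set w := cexp _.
have wn : (w ^+ n.+1 = 1)%R.
  rewrite /w cexp_pow.
  have -> : INR n.+1 * (2 * PI / (INR n + 1)) = 0 + 2 * INR 1 * PI.
    rewrite S_INR /=; field; have := pos_INR n; lra.
  by rewrite /cexp cos_period sin_period cos_0 sin_0.
have [m pm mdvd] := prim_order_exists (ltn0Sn n) wn.
suff : m = n.+1 by move=> <-.
have m0 := prim_order_gt0 pm.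
have mle := dvdn_leq (ltn0Sn n) mdvd.
case: (ltngtP m n.+1) => // hm; last by rewrite ltnNge mle in hm.
have e : cos (INR m * (2 * PI / (INR n + 1))) = 1.
  by have := prim_expr_order pm; rewrite /w cexp_pow => /(congr1 re).
exfalso.
have hN : 0 < INR n + 1 by have := pos_INR n; lra.
have hmR : 0 < INR m < INR n + 1.
  split; first by apply: lt_0_INR; apply/ltP.
  by rewrite -S_INR; apply: lt_INR; apply/ltP.
have := cos_lt1 (INR m * (2 * PI / (INR n + 1))).
rewrite e => h; have : 1 < 1.
  apply: h; split.
    apply: Rmult_lt_0_compat; first lra.
    apply: Rdiv_lt_0_compat; have := PI_RGT_0; lra.
  have -> : INR m * (2 * PI / (INR n + 1)) = 2 * PI * (INR m / (INR n + 1)) by field; lra.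
  have : INR m / (INR n + 1) < 1.
    by apply: (Rmult_lt_reg_r (INR n + 1)) => //; rewrite /Rdiv Rmult_assoc Rinv_l; lra.
  have := PI_RGT_0; nra.
lra.
Qed.

Lemma nrm2_mul (a b : cx) : nrm2 (a * b)%R = nrm2 a * nrm2 b.
Proof. rewrite /nrm2 !cxsimp; ring. Qed.

Lemma nrm2_exp (a : cx) k : nrm2 (a ^+ k)%R = nrm2 a ^ k.
Proof.
elim: k => [|k IH]; first by rewrite /nrm2 /=; ring.
by rewrite exprS nrm2_mul IH.
Qed.

Lemma nrm2_prod (F : nat -> cx) n :
  nrm2 (\prod_(0 <= i < n.+1) F i)%R = prod_upto (fun i => nrm2 (F i)) n.
Proof.
elim: n => [|n IH]; first by rewrite big_nat1.
by rewrite big_nat_recr //= nrm2_mul IH.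
Qed.

Lemma prod_upto_sq f n : prod_upto f n ^ 2 = prod_upto (fun j => f j ^ 2) n.
Proof. elim: n => [|n IH] //=; rewrite -IH; ring. Qed.

Lemma prod_upto_ext f g n : (forall j, (j <= n)%nat -> f j = g j) -> prod_upto f n = prod_upto g n.
Proof.
elim: n => [|n IH] h /=; first by apply: h.
rewrite IH ?h // => j hj; apply: h; apply: (leq_trans hj); exact: leqnSn.
Qed.

Lemma rC_exp p k : ((Cx p 0) ^+ k)%R = Cx (p ^ k) 0.
Proof.
elim: k => [|k IH]; first by [].
rewrite exprS IH; apply: cxE; rewrite !cxsimp /=; ring.
Qed.

Lemma ref_sq (kappa : R) delta n (x y : R) : x ^ 2 + y ^ 2 = 1 -> 0 < rho kappa n ->
  (1 - rho kappa n ^ (n.+1)) ^ 2 <= absprod kappa 0 delta n (x, y) ^ 2 <=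
  (1 + rho kappa n ^ (n.+1)) ^ 2.
Proof.
move=> hz hr.
set p := rho kappa n.
set Z := Cx x y.
set r := Cx p 0.
set w := cexp (2 * PI / (INR n + 1)).
have r0 : r != 0%R.
  apply/eqP => /(congr1 re); rewrite re_zero /=. rewrite /p; lra.
have E : absprod kappa 0 delta n (x, y) ^ 2 = nrm2 (Z ^+ n.+1 - r ^+ n.+1)%R.
  rewrite -(@prod_identity n.+1 r Z w (omega_prim n) r0) nrm2_prod /absprod prod_upto_sq.
  apply: prod_upto_ext => j _.
  rewrite /cdist pow2_sqrt; last by apply: Rplus_le_le_0_compat; apply: pow2_ge_0.
  rewrite /w cexp_pow /nrm2 /cpolar !cxsimp /= -/p.
  have -> : 2 * PI * (INR j + 0 * delta n j) / (INR n + 1) = INR j * (2 * PI / (INR n + 1)).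
    field; have := pos_INR n; lra.
  ring.
rewrite E rC_exp.
have hW : nrm2 (Z ^+ n.+1)%R = 1 by rewrite nrm2_exp /nrm2 hz pow1.
move: hW; set W := (Z ^+ n.+1)%R; rewrite /nrm2 !cxsimp /= => hW.
have hp : 0 <= p ^ n.+1 by apply: pow_le; rewrite /p; lra.
have hi := Rle_0_sqr (im W).
rewrite /Rsqr in hi.
have ha : re W <= 1 by nra.
have ha' : - 1 <= re W by nra.
move: hp; set q := p ^ n.+1 => hp.
have -> : p * p ^ n = q by [].
split; nra.
Qed.

End CxTh.
Import CxTh.

Lemma dl_ext (f g : R -> R) x l l' : (forall y, f y = g y) -> l = l' ->
  derivable_pt_lim f x l -> derivable_pt_lim g x l'.
Proof.
move=> h <-; have -> : g = f by apply: functional_extensionality => y; rewrite h.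
done.
Qed.

Definition Gf r ph t := 1 + r ^ 2 - 2 * r * cos (t - ph).
Definition ell r ph t := ln (Gf r ph t).
Definition ell1 r ph t := 2 * r * sin (t - ph) / Gf r ph t.
Definition ell2 r ph t :=
  (2 * r * cos (t - ph) * Gf r ph t - (2 * r * sin (t - ph)) ^ 2) / (Gf r ph t) ^ 2.

Lemma Gf_lb r ph t : 0 <= r -> (1 - r) ^ 2 <= Gf r ph t.
Proof. move=> hr; rewrite /Gf; have := COS_bound (t - ph); nra. Qed.

Lemma Gf_pos r ph t : 0 <= r < 1 -> 0 < Gf r ph t.
Proof. move=> [h1 h2]; have := Gf_lb r ph t h1; nra. Qed.

Lemma D_shift (f : R -> R) f' ph t : derivable_pt_lim f (t - ph) f' ->
  derivable_pt_lim (fun u => f (u - ph)) t f'.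
Proof.
move=> h.
have h1 : derivable_pt_lim (fun u => u - ph) t 1.
  apply: (@dl_ext (id - fct_cte ph)%F _ _ (1 - 0)) => //; first ring.
  apply: derivable_pt_lim_minus; [apply: derivable_pt_lim_id | apply: derivable_pt_lim_const].
apply: (@dl_ext (comp f (fun u => u - ph)) _ _ (f' * 1)) => //; first ring.
exact: derivable_pt_lim_comp.
Qed.

Lemma D_Gf r ph t : derivable_pt_lim (Gf r ph) t (2 * r * sin (t - ph)).
Proof.
have hc := @D_shift cos _ ph t (derivable_pt_lim_cos (t - ph)).
have hs := derivable_pt_lim_scal _ (2 * r) _ _ hc.
have hk := derivable_pt_lim_const (1 + r ^ 2) t.
have := derivable_pt_lim_minus _ _ _ _ _ hk hs.
apply: dl_ext => [y|]; rewrite /Gf /minus_fct /fct_cte /mult_real_fct; ring.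
Qed.

Lemma D_ell r ph t : 0 <= r < 1 -> derivable_pt_lim (ell r ph) t (ell1 r ph t).
Proof.
move=> hr.
have := derivable_pt_lim_comp _ _ _ _ _ (D_Gf r ph t) (derivable_pt_lim_ln _ (Gf_pos r ph t hr)).
apply: dl_ext => [y|] //; rewrite /ell1 /Rdiv; ring.
Qed.

Lemma D_ell1 r ph t : 0 <= r < 1 -> derivable_pt_lim (ell1 r ph) t (ell2 r ph t).
Proof.
move=> hr.
have hs := @D_shift sin _ ph t (derivable_pt_lim_sin (t - ph)).
have hs2 := derivable_pt_lim_scal _ (2 * r) _ _ hs.
have hG := D_Gf r ph t.
have := derivable_pt_lim_div _ _ _ _ _ hs2 hG (Rgt_not_eq _ _ (Gf_pos r ph t hr)).
apply: dl_ext => [y|] //; rewrite /ell2 /Rsqr /mult_real_fct /div_fct /ell1; field.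
have := Gf_pos r ph t hr; lra.
Qed.

Lemma ell2_bound r ph t : 0 <= r <= 1 -> 0 < Gf r ph t ->
  Rabs (ell2 r ph t) <= 6 / Gf r ph t.
Proof.
move=> hr hG.
set G := Gf r ph t.
have hcs := sin2_cos2 (t - ph); rewrite /Rsqr in hcs.
have hcb := COS_bound (t - ph).
set c := cos (t - ph) in hcs hcb *; set s := sin (t - ph) in hcs *.
have eG : G = (1 - r) ^ 2 + 2 * r * (1 - c) by rewrite /G /Gf -/c; ring.
have h1 : 4 * r ^ 2 * s ^ 2 <= 4 * G.
  have hs2 : s ^ 2 <= 2 * (1 - c) by nra.
  have hr2 : 0 <= r ^ 2 by nra.
  have e1 : r ^ 2 * s ^ 2 <= r ^ 2 * (2 * (1 - c)) by apply: Rmult_le_compat_l.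
  have e2 : r ^ 2 * (1 - c) <= r * (1 - c) by apply: Rmult_le_compat_r; nra.
  have : 0 <= (1 - r) ^ 2 by nra.
  nra.
have h2 : Rabs (2 * r * c * G - (2 * r * s) ^ 2) <= 6 * G.
  have g1 : 0 <= r * G by nra.
  have g2 : 0 <= r * G * (1 + c) by apply: Rmult_le_pos; lra.
  have g3 : 0 <= r * G * (1 - c) by apply: Rmult_le_pos; lra.
  have g4 : r * G <= G by nra.
  have e3 : (2 * r * s) ^ 2 = 4 * r ^ 2 * s ^ 2 by ring.
  rewrite e3; apply: Rabs_le; split; nra.
rewrite /ell2 -/G -/c -/s.
rewrite /Rdiv Rabs_mult Rabs_inv.
rewrite (Rabs_right (G ^ 2)); last by apply: Rle_ge; apply: pow2_ge_0.
apply: (Rle_trans _ (6 * G * / G ^ 2)).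
  apply: Rmult_le_compat_r; last exact: h2.
  apply: Rlt_le; apply: Rinv_0_lt_compat; apply: pow_lt; exact: hG.
right; field; apply: Rgt_not_eq; exact: hG.
Qed.

Lemma between_abs a b c : Rmin a b <= c <= Rmax a b -> Rabs (c - a) <= Rabs (b - a).
Proof. rewrite /Rmin /Rmax; case: Rle_dec => h [h1 h2]; apply: Rabs_le; split_Rabs; lra. Qed.

Lemma between_abs' a b c : Rmin a b <= c <= Rmax a b -> Rabs (c - b) <= Rabs (b - a).
Proof. rewrite /Rmin /Rmax; case: Rle_dec => h [h1 h2]; apply: Rabs_le; split_Rabs; lra. Qed.

Lemma between_off t u v y : Rmin (t + u) (t + v) <= y <= Rmax (t + u) (t + v) ->
  Rabs (y - t) <= Rmax (Rabs u) (Rabs v).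
Proof.
rewrite /Rmin /Rmax; case: Rle_dec => h [h1 h2]; case: Rle_dec => h3; split_Rabs; lra.
Qed.

Lemma D_affine (f f' : R -> R) t a s : derivable_pt_lim f (t + a * s) (f' (t + a * s)) ->
  derivable_pt_lim (fun u => f (t + a * u)) s (a * f' (t + a * s)).
Proof.
move=> h.
have h1 : derivable_pt_lim (fun u => t + a * u) s a.
  apply: (@dl_ext (fct_cte t + mult_real_fct a id)%F _ _ (0 + a * 1)) => //; first ring.
  apply: derivable_pt_lim_plus; first apply: derivable_pt_lim_const.
  apply: derivable_pt_lim_scal; apply: derivable_pt_lim_id.
apply: (@dl_ext (comp f (fun u => t + a * u)) _ _ (f' (t + a * s) * a)) => //; first ring.
exact: derivable_pt_lim_comp.
Qed.

Lemma term_bound r ph t e a m : 0 <= r < 1 -> 0 < a -> 0 < m ->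
  (forall eta, Rabs (eta - t) <= Rmax 1 a * Rabs e -> m <= Gf r ph eta) ->
  Rabs (ell r ph (t + a * e) - a * ell r ph (t + e) + (a - 1) * ell r ph t)
    <= 6 * a * Rabs (a - 1) * e ^ 2 / m.
Proof.
move=> hr ha hm hwin.
set h := fun s => ell r ph (t + a * s) - a * ell r ph (t + 1 * s).
set h' := fun s => a * ell1 r ph (t + a * s) - a * (1 * ell1 r ph (t + 1 * s)).
have Dh : forall c, Rmin 0 e <= c <= Rmax 0 e -> derivable_pt_lim h c (h' c).
  move=> c _; rewrite /h /h'.
  have d1 := @D_affine (ell r ph) (ell1 r ph) t a c (D_ell r ph (t + a * c) hr).
  have d2 := @D_affine (ell r ph) (ell1 r ph) t 1 c (D_ell r ph (t + 1 * c) hr).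
  have d3 := derivable_pt_lim_scal _ a _ _ d2.
  have := derivable_pt_lim_minus _ _ _ _ _ d1 d3.
  by apply: dl_ext => [y|] //; rewrite /minus_fct /mult_real_fct.
have [c [Ec Hc]] := MVT_abs h h' 0 e Dh.
have Dl : forall y, Rmin (t + c) (t + a * c) <= y <= Rmax (t + c) (t + a * c) ->
    derivable_pt_lim (ell1 r ph) y (ell2 r ph y).
  by move=> y _; apply: D_ell1.
have [eta [Eeta Heta]] := MVT_abs (ell1 r ph) (ell2 r ph) (t + c) (t + a * c) Dl.
have hce : Rabs c <= Rabs e.
  have := between_abs _ _ _ Hc; rewrite !Rminus_0_r //.
have hwe : Rabs (eta - t) <= Rmax 1 a * Rabs e.
  have h1 := between_off _ _ _ _ Heta.
  rewrite Rabs_mult (Rabs_right a) in h1; last lra.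
  apply: (Rle_trans _ _ _ h1).
  have hc0 := Rabs_pos c.
  rewrite /Rmax; case: Rle_dec => h5; case: Rle_dec => h6; nra.
have hGe : m <= Gf r ph eta by apply: hwin.
have hGp : 0 < Gf r ph eta by lra.
have hb := ell2_bound r ph eta (conj (proj1 hr) (Rlt_le _ _ (proj2 hr))) hGp.
have hb2 : Rabs (ell2 r ph eta) <= 6 / m.
  apply: (Rle_trans _ _ _ hb); apply: Rmult_le_compat_l; first lra.
  by apply: Rinv_le_contravar.
have Eh : ell r ph (t + a * e) - a * ell r ph (t + e) + (a - 1) * ell r ph t = h e - h 0.
  rewrite /h !Rmult_1_l Rmult_0_r Rplus_0_r; ring.
rewrite Eh Ec Rminus_0_r /h'.
have -> : a * ell1 r ph (t + a * c) - a * (1 * ell1 r ph (t + 1 * c))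
  = a * (ell1 r ph (t + a * c) - ell1 r ph (t + c)) by rewrite !Rmult_1_l; ring.
rewrite Rabs_mult (Rabs_right a); last lra.
rewrite Eeta.
have -> : t + a * c - (t + c) = (a - 1) * c by ring.
rewrite Rabs_mult.
have hc0 := Rabs_pos c; have he0 := Rabs_pos e; have ha1 := Rabs_pos (a - 1).
have he2 : e ^ 2 = Rabs e * Rabs e by rewrite -Rabs_mult; rewrite Rabs_right; [ring | apply: Rle_ge; nra].
rewrite he2.
have hl2 := Rabs_pos (ell2 r ph eta).
have : Rabs (ell2 r ph eta) * (Rabs (a - 1) * Rabs c) * Rabs e <= 6 / m * (Rabs (a - 1) * Rabs e) * Rabs e.
  apply: Rmult_le_compat_r => //; apply: Rmult_le_compat => //; try nra.
have -> : 6 * a * Rabs (a - 1) * (Rabs e * Rabs e) / m = a * (6 / m * (Rabs (a - 1) * Rabs e) * Rabs e) by field; lra.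
move=> hh; rewrite Rmult_assoc; apply: Rmult_le_compat_l; lra.
Qed.

Lemma sin_lip a b : Rabs (sin a - sin b) <= Rabs (a - b).
Proof.
have [c [Ec _]] := MVT_abs sin cos b a (fun c _ => derivable_pt_lim_sin c).
rewrite Ec; have := Rabs_pos (a - b); have := COS_bound c => hc h.
have : Rabs (cos c) <= 1 by apply: Rabs_le; lra.
nra.
Qed.

Lemma sin_ge_third y : 0 <= y <= PI / 2 -> y / 3 <= sin y.
Proof.
move=> [h1 h2].
have hp := PI_4.
have [hb _] := sin_bound y 0 h1 ltac:(have := PI_RGT_0; lra).
move: hb; rewrite /sin_approx /= /sin_term /=.
have hy2 : y ^ 2 <= 4 by nra.
move=> hb.
apply: (Rle_trans _ _ _ _ hb).
have -> : (-1) ^ 0 * (y ^ 1 / INR 1) + (-1) ^ 1 * (y ^ 3 / INR (3 * 2)) = y - y ^ 3 / 6.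
  rewrite /=; field.
have : y ^ 3 = y * y ^ 2 by ring.
nra.
Qed.

Lemma div_le1 a N : 0 < N -> a <= N -> a / N <= 1.
Proof.
move=> hN h; have -> : 1 = N / N by field; lra.
rewrite /Rdiv; apply: Rmult_le_compat_r => //; apply: Rlt_le; apply: Rinv_0_lt_compat; lra.
Qed.

Lemma div_ge0 a N : 0 < N -> 0 <= a -> 0 <= a / N.
Proof. move=> hN h; rewrite /Rdiv; apply: Rmult_le_pos => //; apply: Rlt_le; apply: Rinv_0_lt_compat; lra. Qed.

Lemma sin_circ x N : 0 < N -> Rabs x <= N ->
  PI / (3 * N) * Rmin (Rabs x) (N - Rabs x) <= Rabs (sin (PI * x / N)).
Proof.
move=> hN hx.
have hP := PI_RGT_0.
set z := Rabs x / N.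
have hz0 : 0 <= z by apply: div_ge0 => //; apply: Rabs_pos.
have hz1 : z <= 1 by apply: div_le1.
set y := PI * z.
have hy0 : 0 <= y by rewrite /y; nra.
have hyP : y <= PI by rewrite /y; nra.
have Es : Rabs (sin (PI * x / N)) = sin y.
  rewrite /y /z; case: (Rle_dec 0 x) => h.
    rewrite (Rabs_right x); last lra.
    have -> : PI * x / N = PI * (x / N) by field; lra.
    rewrite Rabs_right //; apply: Rle_ge; apply: sin_ge_0.
      apply: Rmult_le_pos; [lra | apply: div_ge0 => //].
    have : x / N <= 1 by apply: div_le1 => //; rewrite Rabs_right in hx; lra.
    nra.
  rewrite (Rabs_left x); last lra.
  have -> : PI * x / N = - (PI * (- x / N)) by field; lra.
  rewrite sin_neg Rabs_Ropp Rabs_right //; apply: Rle_ge; apply: sin_ge_0.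
    apply: Rmult_le_pos; [lra | apply: div_ge0 => //; lra].
  have : - x / N <= 1 by apply: div_le1 => //; rewrite Rabs_left in hx; lra.
  nra.
rewrite Es.
have hm1 := Rmin_l (Rabs x) (N - Rabs x); have hm2 := Rmin_r (Rabs x) (N - Rabs x).
have hm0 : 0 <= Rmin (Rabs x) (N - Rabs x).
  apply: Rmin_glb; [apply: Rabs_pos | lra].
have hq : 0 < PI / (3 * N) by apply: Rdiv_lt_0_compat; lra.
case: (Rle_dec y (PI / 2)) => hyh.
  have := sin_ge_third y (conj hy0 hyh).
  have : PI / (3 * N) * Rmin (Rabs x) (N - Rabs x) <= PI / (3 * N) * Rabs x.
    by apply: Rmult_le_compat_l; lra.
  have -> : PI / (3 * N) * Rabs x = y / 3 by rewrite /y /z; field; lra.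
  lra.
have : (PI - y) / 3 <= sin (PI - y) by apply: sin_ge_third; lra.
rewrite sin_PI_x.
have : PI / (3 * N) * Rmin (Rabs x) (N - Rabs x) <= PI / (3 * N) * (N - Rabs x).
  by apply: Rmult_le_compat_l; lra.
have -> : PI / (3 * N) * (N - Rabs x) = (PI - y) / 3 by rewrite /y /z; field; lra.
lra.
Qed.

Definition Tc (W : R) := 3 * W / PI + 3.
Definition c4 (c0 W : R) := Rmin (PI ^ 2 / 36) (c0 ^ 2 / (1 + Tc W ^ 2)).

Lemma c4_pos c0 W : 0 < c0 -> 0 < c4 c0 W.
Proof.
move=> h; rewrite /c4; apply: Rmin_glb_lt.
  have := PI_RGT_0; move=> hP; apply: Rdiv_lt_0_compat; nra.
apply: Rdiv_lt_0_compat; [nra | have := pow2_ge_0 (Tc W); lra].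
Qed.

Lemma window_lb r ph N c0 W x t eta :
  0 < N -> 1/2 <= r < 1 -> c0 / N <= 1 - r -> 0 < c0 -> 0 <= W ->
  Rabs x <= N -> t - ph = 2 * PI * x / N -> Rabs (eta - t) <= W / N ->
  c4 c0 W * (1 + (Rmin (Rabs x) (N - Rabs x)) ^ 2) / N ^ 2 <= Gf r ph eta.
Proof.
move=> hN hr hd hc0 hW hx ht he.
have hP := PI_RGT_0.
set D := Rmin (Rabs x) (N - Rabs x).
have hD0 : 0 <= D by apply: Rmin_glb; [apply: Rabs_pos | lra].
have hcd : 0 <= c0 / N by apply: div_ge0; lra.
have hG1 : (c0 / N) ^ 2 <= Gf r ph eta.
  apply: (Rle_trans _ ((1 - r) ^ 2)); first by apply: pow_incr; lra.
  apply: Gf_lb; lra.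
have hG2 : 2 * sin ((eta - ph) / 2) ^ 2 <= Gf r ph eta.
  have e1 : cos (eta - ph) = 1 - 2 * sin ((eta - ph) / 2) * sin ((eta - ph) / 2).
    rewrite -cos_2a_sin; congr cos; field.
  rewrite /Gf e1.
  have := pow2_ge_0 (sin ((eta - ph) / 2)) => h0.
  have : 0 <= sin ((eta - ph) / 2) ^ 2 * (r - 1/2) by apply: Rmult_le_pos; lra.
  have : 0 <= (1 - r) ^ 2 by nra.
  nra.
have hS1 : PI / (3 * N) * D <= Rabs (sin ((t - ph) / 2)).
  have -> : (t - ph) / 2 = PI * x / N by rewrite ht; field; lra.
  exact: sin_circ.
have hS2 : Rabs (sin ((eta - ph) / 2) - sin ((t - ph) / 2)) <= W / (2 * N).
  apply: (Rle_trans _ _ _ (sin_lip _ _)).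
  have -> : (eta - ph) / 2 - (t - ph) / 2 = (eta - t) / 2 by field.
  rewrite Rabs_mult Rabs_inv (Rabs_right 2); last lra.
  have -> : W / (2 * N) = W / N * / 2 by field; lra.
  apply: Rmult_le_compat_r => //; lra.
set S := Rabs (sin ((eta - ph) / 2)).
have hS : PI / (3 * N) * D - W / (2 * N) <= S.
  have := Rabs_triang_inv (sin ((t - ph) / 2)) (sin ((t - ph) / 2) - sin ((eta - ph) / 2)).
  have -> : sin ((t - ph) / 2) - (sin ((t - ph) / 2) - sin ((eta - ph) / 2)) = sin ((eta - ph) / 2) by ring.
  rewrite -Rabs_Ropp Ropp_minus_distr in hS2.
  rewrite /S; lra.
have hSS : S ^ 2 = sin ((eta - ph) / 2) ^ 2 by rewrite /S pow2_abs.
have hS0 : 0 <= S := Rabs_pos _.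
have hN2 : 0 < N ^ 2 by apply: pow_lt.
have hc4 := c4_pos c0 W hc0.
apply: (Rmult_le_reg_r (N ^ 2)) => //.
have -> : c4 c0 W * (1 + D ^ 2) / N ^ 2 * N ^ 2 = c4 c0 W * (1 + D ^ 2) by field; lra.
case: (Rle_dec (Tc W) D) => hT.
  have hNS : PI * D / 6 <= N * S.
    have : PI / (3 * N) * D - W / (2 * N) = (PI * D / 3 - W / 2) / N by field; lra.
    move=> e; rewrite e in hS.
    have hS' : PI * D / 3 - W / 2 <= S * N.
      have := Rmult_le_compat_r N _ _ (Rlt_le _ _ hN) hS.
      by have -> : (PI * D / 3 - W / 2) / N * N = PI * D / 3 - W / 2 by field; lra.
    have : PI * Tc W / 6 = W / 2 + PI / 2 by rewrite /Tc; field; lra.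
    nra.
  have hD3 : 3 <= D.
    have : 0 <= 3 * W / PI by apply: div_ge0; lra.
    move: hT; rewrite /Tc; lra.
  have h36 : PI ^ 2 * (1 + D ^ 2) / 36 <= Gf r ph eta * N ^ 2.
    have : (PI * D / 6) ^ 2 <= (N * S) ^ 2 by apply: pow_incr; nra.
    have : (N * S) ^ 2 = N ^ 2 * sin ((eta - ph) / 2) ^ 2 by rewrite -hSS; ring.
    have := Rmult_le_compat_r (N ^ 2) _ _ (Rlt_le _ _ hN2) hG2.
    have : 0 <= PI ^ 2 * (D ^ 2 - 1) by apply: Rmult_le_pos; nra.
    nra.
  have : c4 c0 W <= PI ^ 2 / 36 by apply: Rmin_l.
  nra.
have hT2 : D ^ 2 <= Tc W ^ 2 by apply: pow_incr; lra.
have hTp : 0 < 1 + Tc W ^ 2 by have := pow2_ge_0 (Tc W); lra.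
have hc : c4 c0 W <= c0 ^ 2 / (1 + Tc W ^ 2) by apply: Rmin_r.
have hG3 : c0 ^ 2 <= Gf r ph eta * N ^ 2.
  have -> : c0 ^ 2 = (c0 / N) ^ 2 * N ^ 2 by field; lra.
  apply: Rmult_le_compat_r; lra.
have hA : c4 c0 W * (1 + D ^ 2) <= c0 ^ 2 / (1 + Tc W ^ 2) * (1 + Tc W ^ 2).
  have := pow2_ge_0 D; move=> ?; apply: Rmult_le_compat; lra.
have hB : c0 ^ 2 / (1 + Tc W ^ 2) * (1 + Tc W ^ 2) = c0 ^ 2 by field; lra.
lra.
Qed.

Fixpoint sum_upto (f : nat -> R) (n : nat) : R :=
  match n with
  | O => f O
  | S m => sum_upto f m + f (S m)
  end.

Lemma sum_le f g n : (forall j, (j <= n)%nat -> f j <= g j) -> sum_upto f n <= sum_upto g n.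
Proof.
elim: n => [|n IH] h /=; first by apply: h.
apply: Rplus_le_compat; last by apply: h.
apply: IH => j hj; apply: h; apply: (leq_trans hj); exact: leqnSn.
Qed.

Lemma sum_ext f g n : (forall j, (j <= n)%nat -> f j = g j) -> sum_upto f n = sum_upto g n.
Proof.
elim: n => [|n IH] h /=; first by apply: h.
rewrite IH ?h // => j hj; apply: h; apply: (leq_trans hj); exact: leqnSn.
Qed.

Lemma sum_plus f g n : sum_upto (fun j => f j + g j) n = sum_upto f n + sum_upto g n.
Proof. elim: n => [|n IH] //=; rewrite IH; ring. Qed.

Lemma sum_scal c f n : sum_upto (fun j => c * f j) n = c * sum_upto f n.
Proof. elim: n => [|n IH] //=; rewrite IH; ring. Qed.

Lemma sum_abs f n : Rabs (sum_upto f n) <= sum_upto (fun j => Rabs (f j)) n.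
Proof.
elim: n => [|n IH] /=; first lra.
apply: (Rle_trans _ _ _ (Rabs_triang _ _)); lra.
Qed.

Lemma sum_tele (F : R -> R) c n :
  sum_upto (fun j => F (INR j + 1 + c) - F (INR j + c)) n = F (INR n + 1 + c) - F c.
Proof.
elim: n => [|n IH]; first by rewrite /= !Rplus_0_l.
cbn [sum_upto]; rewrite IH S_INR.
ring.
Qed.

Definition Q (y : R) := / (1 + y ^ 2).

Lemma Q_atan y : Q y <= 3 * (atan (y + 1) - atan y).
Proof.
have D : forall c, Rmin y (y + 1) <= c <= Rmax y (y + 1) ->
  derivable_pt_lim atan c (/ (1 + c ^ 2)) by move=> c _; apply: derivable_pt_lim_atan.
have [c [Ec Hc]] := MVT_abs atan (fun c => / (1 + c ^ 2)) y (y + 1) D.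
have hinc := atan_increasing y (y + 1) ltac:(lra).
rewrite Rabs_right in Ec; last lra.
have E1 : y + 1 - y = 1 by ring.
rewrite E1 in Ec.
rewrite Rabs_R1 Rmult_1_r Rabs_right in Ec; last first.
  apply: Rle_ge; apply: Rlt_le; apply: Rinv_0_lt_compat; have := pow2_ge_0 c; lra.
rewrite Ec /Q.
move: Hc; rewrite /Rmin /Rmax; case: Rle_dec => h; last lra.
move=> [h1 h2].
have hca : Rabs c <= Rabs y + 1 by split_Rabs; lra.
have hc2 : 1 + c ^ 2 <= 3 * (1 + y ^ 2).
  rewrite -(pow2_abs c) -(pow2_abs y).
  have h3 : Rabs c ^ 2 <= (Rabs y + 1) ^ 2 by apply: pow_incr; split; [apply: Rabs_pos | lra].
  have : 0 <= (Rabs y - 1) ^ 2 by apply: pow2_ge_0.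
  nra.
have hp : 0 < 1 + y ^ 2 by have := pow2_ge_0 y; lra.
have hq : 0 < 1 + c ^ 2 by have := pow2_ge_0 c; lra.
have -> : 3 * / (1 + c ^ 2) = / ((1 + c ^ 2) / 3) by field; lra.
apply: Rinv_le_contravar; lra.
Qed.

Lemma sum_Q c n : sum_upto (fun j => Q (INR j + c)) n <= 3 * PI.
Proof.
apply: (Rle_trans _ (sum_upto (fun j => 3 * (atan (INR j + 1 + c) - atan (INR j + c))) n)).
  apply: sum_le => j _; have := Q_atan (INR j + c).
  by have -> : INR j + c + 1 = INR j + 1 + c by ring.
rewrite sum_scal (sum_tele atan c n).
have := atan_bound (INR n + 1 + c); have := atan_bound c; lra.
Qed.

Lemma Q_min x N : 0 <= N ->
  / (1 + (Rmin (Rabs x) (N - Rabs x)) ^ 2) <= Q x + Q (N - x) + Q (N + x).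
Proof.
move=> hN.
have q1 : forall y, 0 <= Q y by move=> y; apply: Rlt_le; apply: Rinv_0_lt_compat; have := pow2_ge_0 y; lra.
have hx1 := q1 x; have hx2 := q1 (N - x); have hx3 := q1 (N + x).
rewrite /Rmin; case: Rle_dec => h.
  have -> : Rabs x ^ 2 = x ^ 2 by rewrite pow2_abs.
  rewrite -/(Q x); lra.
case: (Rle_dec 0 x) => hx.
  rewrite Rabs_right; last lra.
  rewrite -/(Q (N - x)); lra.
rewrite Rabs_left; last lra.
have -> : N - - x = N + x by ring.
rewrite -/(Q (N + x)); lra.
Qed.

Lemma angle_exists x y : x ^ 2 + y ^ 2 = 1 ->
  exists ph, 0 <= ph < 2 * PI /\ cos ph = x /\ sin ph = y.
Proof.
move=> h.
have hP := PI_RGT_0.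
have hx : -1 <= x <= 1 by split; nra.
have hac := acos_bound x.
have hs : sin (acos x) = Rabs y.
  rewrite sin_acos //.
  have -> : 1 - x² = y ^ 2 by rewrite /Rsqr; lra.
  by rewrite -sqrt_Rsqr_abs /Rsqr; congr sqrt; ring.
case: (Rle_dec 0 y) => hy.
  exists (acos x); split; first lra.
  split; first exact: cos_acos.
  by rewrite hs Rabs_right //; lra.
exists (2 * PI - acos x); split.
  split; first lra.
  have : acos x <> 0.
    move=> e; have := cos_acos x hx; rewrite e cos_0 => ex.
    have : y ^ 2 = 0 by nra.
    move=> hy2; have : y = 0 by nra.
    lra.
  lra.
split.
  by rewrite cos_minus cos_2PI sin_2PI cos_acos //; ring.
rewrite sin_minus cos_2PI sin_2PI hs Rabs_left; last lra.
ring.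
Qed.

Lemma cdist_polar r ph th :
  cdist (cos ph, sin ph) (cpolar r th) = sqrt (Gf r ph th).
Proof.
rewrite /cdist /cpolar /Gf /=; congr sqrt.
rewrite cos_minus; have := sin2_cos2 ph; have := sin2_cos2 th; rewrite /Rsqr => h1 h2.
have e : r * r * (sin th * sin th + cos th * cos th) = r * r by rewrite h1; ring.
lra.
Qed.

Lemma prod_pos f n : (forall j, 0 < f j) -> 0 < prod_upto f n.
Proof. move=> h; elim: n => [|n IH] /=; [exact: h | apply: Rmult_lt_0_compat => //]. Qed.

Lemma ln_prod f n : (forall j, 0 < f j) -> ln (prod_upto f n) = sum_upto (fun j => ln (f j)) n.
Proof.
move=> h; elim: n => [|n IH] //=.
rewrite ln_mult ?IH //; exact: prod_pos.
Qed.

Lemma ln_sqrt' a : 0 < a -> ln (sqrt a) = ln a / 2.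
Proof.
move=> ha; have hs := sqrt_lt_R0 a ha.
have : ln a = ln (sqrt a * sqrt a) by rewrite sqrt_sqrt //; lra.
rewrite ln_mult // => ->; field.
Qed.

Lemma prod_upto_ext' f g n : (forall j, f j = g j) -> prod_upto f n = prod_upto g n.
Proof. move=> h; elim: n => [|n IH] /=; [exact: h | by rewrite IH h]. Qed.

Definition th (delta : nat -> nat -> R) n a j := 2 * PI * (INR j + a * delta n j) / (INR n + 1).

Lemma ln_absprod kappa a delta n ph : 0 <= rho kappa n < 1 ->
  ln (absprod kappa a delta n (cos ph, sin ph)) =
  sum_upto (fun j => ell (rho kappa n) ph (th delta n a j)) n / 2.
Proof.
move=> hr.
rewrite /absprod.
rewrite (prod_upto_ext' (fun j => cdist (cos ph, sin ph) (cpolar (rho kappa n) (2 * PI * (INR j + a * delta n j) / (INR n + 1))))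
   (fun j => sqrt (Gf (rho kappa n) ph (th delta n a j)))); last by move=> j; rewrite cdist_polar.
rewrite ln_prod; last by move=> j; apply: sqrt_lt_R0; apply: Gf_pos.
have -> : sum_upto (fun j => ln (sqrt (Gf (rho kappa n) ph (th delta n a j)))) n =
   sum_upto (fun j => / 2 * ell (rho kappa n) ph (th delta n a j)) n.
  apply: sum_ext => j _; rewrite ln_sqrt' /ell; [field | exact: Gf_pos].
rewrite sum_scal; field.
Qed.

Lemma rho_bounds kappa n : 0 < kappa -> 1/2 <= rho kappa n < 1.
Proof.
move=> hk; have hN : 0 < INR n + 1 by have := pos_INR n; lra.
have : 0 < kappa / (INR n + 1) by apply: Rdiv_lt_0_compat.
rewrite /rho /Rmax; case: Rle_dec => h; lra.
Qed.

Lemma rho_gap kappa n : 0 < kappa -> Rmin (1/2) kappa / (INR n + 1) <= 1 - rho kappa n.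
Proof.
move=> hk; have hN1 : 1 <= INR n + 1 by have := pos_INR n; lra.
have hm1 := Rmin_l (1/2) kappa; have hm2 := Rmin_r (1/2) kappa.
have hm0 : 0 < Rmin (1/2) kappa by apply: Rmin_glb_lt; lra.
set m := Rmin (1/2) kappa in hm1 hm2 hm0 *.
have hinv : 0 < / (INR n + 1) by apply: Rinv_0_lt_compat; lra.
have a1 : m / (INR n + 1) <= m.
  apply: (Rmult_le_reg_r (INR n + 1)); first lra.
  have -> : m / (INR n + 1) * (INR n + 1) = m by field; lra.
  nra.
have a2 : m / (INR n + 1) <= kappa / (INR n + 1).
  rewrite /Rdiv; apply: Rmult_le_compat_r; lra.
rewrite /rho /Rmax; case: Rle_dec => h; lra.
Qed.

Lemma exp_pow_nat a k : exp a ^ k = exp (INR k * a).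
Proof.
elim: k => [|k IH]; first by rewrite /= Rmult_0_l exp_0.
change (exp a ^ k.+1) with (exp a * exp a ^ k); rewrite IH S_INR -exp_plus; congr exp; ring.
Qed.

Lemma pow_le_base x k : 0 <= x <= 1 -> x ^ k.+1 <= x.
Proof.
move=> hx; elim: k => [|k IH] /=; first lra.
have : 0 <= x ^ k.+1 by apply: pow_le; lra.
move: IH => /= IH h; nra.
Qed.

Lemma rho_pow kappa n : 0 < kappa -> rho kappa n ^ n.+1 <= Rmax (1/2) (exp (- kappa)).
Proof.
move=> hk; have hN : 0 < INR n + 1 by have := pos_INR n; lra.
have hM1 := Rmax_l (1/2) (exp (- kappa)); have hM2 := Rmax_r (1/2) (exp (- kappa)).
rewrite /rho {1}/Rmax; case: Rle_dec => h.
  apply: (Rle_trans _ (exp (- kappa / (INR n + 1)) ^ n.+1)).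
    apply: pow_incr; split; first lra.
    have := exp_ineq1_le (- kappa / (INR n + 1)).
    have -> : - kappa / (INR n + 1) = - (kappa / (INR n + 1)) by field; lra.
    lra.
  rewrite exp_pow_nat S_INR.
  have -> : (INR n + 1) * (- kappa / (INR n + 1)) = - kappa by field; lra.
  lra.
apply: (Rle_trans _ (1/2) _ _ hM1).
apply: pow_le_base; lra.
Qed.

Lemma absprod_pos kappa a delta n ph : 0 <= rho kappa n < 1 ->
  0 < absprod kappa a delta n (cos ph, sin ph).
Proof.
move=> hr; rewrite /absprod; apply: prod_pos => j.
rewrite cdist_polar; apply: sqrt_lt_R0; exact: Gf_pos.
Qed.

Lemma ln_le' a b : 0 < a -> a <= b -> ln a <= ln b.
Proof. move=> ha [h|->]; [apply: Rlt_le; exact: ln_increasing | lra]. Qed.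

Lemma exp_le' a b : a <= b -> exp a <= exp b.
Proof. move=> [h|->]; [apply: Rlt_le; exact: exp_increasing | lra]. Qed.

Lemma sum_lin3 f g h a b n :
  sum_upto (fun j => f j - a * g j + b * h j) n = sum_upto f n + (- a) * sum_upto g n + b * sum_upto h n.
Proof. elim: n => [|n IH] /=; [ring | rewrite IH; ring]. Qed.

Lemma sum_plus3 f g h n :
  sum_upto (fun j => f j + g j + h j) n = sum_upto f n + sum_upto g n + sum_upto h n.
Proof. elim: n => [|n IH] /=; [ring | rewrite IH; ring]. Qed.

Lemma Q_even y : Q (- y) = Q y.
Proof. by rewrite /Q; congr Rinv; ring. Qed.

Lemma term_est (alpha kappa M : R) (delta : nat -> nat -> R) n ph j :
  0 < alpha -> 0 < kappa -> 0 <= M -> Rabs (delta n j) <= M -> (j <= n)%nat ->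
  0 <= ph < 2 * PI ->
  let N := INR n + 1 in
  let r := rho kappa n in
  let c0 := Rmin (1/2) kappa in
  let W := Rmax 1 alpha * (2 * PI * M) in
  let K := 6 * alpha * Rabs (alpha - 1) * (2 * PI * M) ^ 2 / c4 c0 W in
  let p := N * ph / (2 * PI) in
  Rabs (ell r ph (th delta n alpha j) - alpha * ell r ph (th delta n 1 j)
        + (alpha - 1) * ell r ph (th delta n 0 j))
  <= K * (Q (INR j + - p) + Q (INR j + (- p - N)) + Q (INR j + (N - p))).
Proof.
move=> ha hk hM0 hdj hjn hph N r c0 W K p.
have hP := PI_RGT_0.
have hN : 0 < N by rewrite /N; have := pos_INR n; lra.
have hr := rho_bounds kappa n hk.
have hc0 : 0 < c0 by apply: Rmin_glb_lt; lra.
have hW : 0 <= W.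
  rewrite /W; apply: Rmult_le_pos; first by have := Rmax_l 1 alpha; lra.
  nra.
have hc4 := c4_pos c0 W hc0.
set t := th delta n 0 j.
set e := 2 * PI * delta n j / N.
have E1 : th delta n alpha j = t + alpha * e by rewrite /t /e /th -/N; field; lra.
have E2 : th delta n 1 j = t + e by rewrite /t /e /th -/N; field; lra.
set x := INR j - p.
set D := Rmin (Rabs x) (N - Rabs x).
set m := c4 c0 W * (1 + D ^ 2) / N ^ 2.
have hD2 : 0 <= D ^ 2 by apply: pow2_ge_0.
have hN2 : 0 < N ^ 2 by apply: pow_lt.
have hm : 0 < m.
  rewrite /m; apply: Rdiv_lt_0_compat => //; apply: Rmult_lt_0_compat; lra.
have hp0 : 0 <= p by rewrite /p; apply: div_ge0; nra.
have hpN : p < N.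
  rewrite /p; apply: (Rmult_lt_reg_r (2 * PI)); first lra.
  have -> : N * ph / (2 * PI) * (2 * PI) = N * ph by field; lra.
  nra.
have hjN : INR j <= INR n by apply: le_INR; apply/leP.
have hj0 := pos_INR j.
have hNn : N = INR n + 1 by [].
have hx : Rabs x <= N by rewrite /x; apply: Rabs_le; lra.
have he : Rabs e <= 2 * PI * M / N.
  have -> : e = (2 * PI / N) * delta n j by rewrite /e; field; lra.
  have hq : 0 <= 2 * PI / N by apply: div_ge0; lra.
  rewrite Rabs_mult (Rabs_right (2 * PI / N)); last lra.
  have -> : 2 * PI * M / N = 2 * PI / N * M by field; lra.
  by apply: Rmult_le_compat_l.
have hwin : forall eta, Rabs (eta - t) <= Rmax 1 alpha * Rabs e -> m <= Gf r ph eta.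
  move=> eta heta; rewrite /m.
  apply: (window_lb r ph N c0 W x t eta) => //.
  - exact: rho_gap.
  - rewrite /t /th /x /p -/N; field; lra.
  - apply: (Rle_trans _ _ _ heta).
    have -> : W / N = Rmax 1 alpha * (2 * PI * M / N) by rewrite /W; field; lra.
    apply: Rmult_le_compat_l => //; have := Rmax_l 1 alpha; lra.
have hr0 : 0 <= r < 1 by rewrite /r; lra.
have hTB := term_bound r ph t e alpha m hr0 ha hm hwin.
rewrite E1 E2.
apply: (Rle_trans _ _ _ hTB).
have hQ := Q_min x N (Rlt_le _ _ hN).
have hK : 0 <= K.
  rewrite /K; apply: div_ge0 => //; apply: Rmult_le_pos; last by apply: pow2_ge_0.
  apply: Rmult_le_pos; [lra | apply: Rabs_pos].
have hD1 : 0 < 1 + D ^ 2 by lra.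
apply: (Rle_trans _ (K * / (1 + D ^ 2))); last first.
  apply: Rmult_le_compat_l => //.
  move: hQ; rewrite -/D.
  have -> : Q (INR j + - p) = Q x by rewrite /x.
  have -> : Q (INR j + (- p - N)) = Q (N - x) by rewrite -Q_even /x; congr Q; ring.
  have -> : Q (INR j + (N - p)) = Q (N + x) by rewrite /x; congr Q; ring.
  done.
have he2 : e ^ 2 * N ^ 2 <= (2 * PI * M) ^ 2.
  have -> : e ^ 2 * N ^ 2 = (Rabs e * N) ^ 2 by rewrite -(pow2_abs e); ring.
  apply: pow_incr; split; first by apply: Rmult_le_pos; [apply: Rabs_pos | lra].
  have := Rmult_le_compat_r N _ _ (Rlt_le _ _ hN) he.
  by have -> : 2 * PI * M / N * N = 2 * PI * M by field; lra.
have hA : 0 <= 6 * alpha * Rabs (alpha - 1) by have := Rabs_pos (alpha - 1); nra.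
have -> : 6 * alpha * Rabs (alpha - 1) * e ^ 2 / m
   = 6 * alpha * Rabs (alpha - 1) * (e ^ 2 * N ^ 2) / (c4 c0 W * (1 + D ^ 2)).
  rewrite /m; field; split; lra.
have -> : K * / (1 + D ^ 2) = 6 * alpha * Rabs (alpha - 1) * (2 * PI * M) ^ 2 / (c4 c0 W * (1 + D ^ 2)).
  rewrite /K; field; split; lra.
rewrite /Rdiv; apply: Rmult_le_compat_r.
  apply: Rlt_le; apply: Rinv_0_lt_compat; apply: Rmult_lt_0_compat; lra.
by apply: Rmult_le_compat_l.
Qed.

Theorem mainTheorem2 (alpha kappa : R) (delta : nat -> nat -> R)
  (halpha : 0 < alpha) (hkappa : 0 < kappa)
  (hdelta : exists M, M < 1/2 /\ forall n j, (j <= n)%coq_nat -> Rabs (delta n j) <= M) :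
  exists c C, 0 < c /\ c <= C /\
    forall (n : nat) (z : R * R), fst z ^ 2 + snd z ^ 2 = 1 ->
      c <= Rn kappa alpha delta n z /\ Rn kappa alpha delta n z <= C.
Proof.
case: hdelta => M [hM hd].
have hP := PI_RGT_0.
have hM0 : 0 <= M by have := hd 0%nat 0%nat (le_n 0); have := Rabs_pos (delta 0%nat 0%nat); lra.
set c0 := Rmin (1/2) kappa.
have hc0 : 0 < c0 by apply: Rmin_glb_lt; lra.
set W := Rmax 1 alpha * (2 * PI * M).
have hW : 0 <= W.
  rewrite /W; apply: Rmult_le_pos; first by have := Rmax_l 1 alpha; lra.
  nra.
have hc4 := c4_pos c0 W hc0.
set K := 6 * alpha * Rabs (alpha - 1) * (2 * PI * M) ^ 2 / c4 c0 W.
have hK : 0 <= K.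
  rewrite /K; apply: div_ge0 => //; apply: Rmult_le_pos; last by apply: pow2_ge_0.
  apply: Rmult_le_pos; [lra | apply: Rabs_pos].
set c1 := 1 - Rmax (1/2) (exp (- kappa)).
have hek : exp (- kappa) < 1 by rewrite -exp_0; apply: exp_increasing; lra.
have hc1 : 0 < c1 by rewrite /c1 /Rmax; case: Rle_dec; lra.
have hc1' : c1 <= 1/2 by rewrite /c1; have := Rmax_l (1/2) (exp (- kappa)); lra.
set L0 := ln 2 - ln c1.
have hln2 : 0 < ln 2 by rewrite -ln_1; apply: ln_increasing; lra.
have hlnc1 : ln c1 < 0 by rewrite -ln_1; apply: ln_increasing; lra.
have hL0 : 0 <= L0 by rewrite /L0; lra.
set B := K * (9 * PI) / 2 + Rabs (1 - alpha) * L0.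
have hB : 0 <= B.
  rewrite /B; apply: Rplus_le_le_0_compat; first by apply: div_ge0; nra.
  apply: Rmult_le_pos => //; apply: Rabs_pos.
exists (exp (- B)), (exp B).
split; first exact: exp_pos.
split; first by apply: exp_le'; lra.
move=> n [x y] /= hz.
have [ph [hph [hcx hsy]]] := angle_exists x y hz.
rewrite -hcx -hsy.
have hr := rho_bounds kappa n hkappa.
have hr0 : 0 <= rho kappa n < 1 by lra.
set r := rho kappa n in hr hr0 *.
set N := INR n + 1.
have hN : 0 < N by rewrite /N; have := pos_INR n; lra.
set L := fun a => sum_upto (fun j => ell r ph (th delta n a j)) n.
have hA : forall a, ln (absprod kappa a delta n (cos ph, sin ph)) = L a / 2.
  by move=> a; rewrite ln_absprod.
have Ap : forall a, 0 < absprod kappa a delta n (cos ph, sin ph).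
  by move=> a; apply: absprod_pos.
have hRp : 0 < Rn kappa alpha delta n (cos ph, sin ph).
  rewrite /Rn /Rdiv; apply: Rmult_lt_0_compat => //.
  apply: Rinv_0_lt_compat; rewrite /Rpower; exact: exp_pos.
have hRn : ln (Rn kappa alpha delta n (cos ph, sin ph)) = L alpha / 2 - alpha * (L 1 / 2).
  rewrite /Rn /Rdiv ln_mult // ?ln_Rinv ?ln_Rpower ?hA //.
    rewrite /Rpower; exact: exp_pos.
  apply: Rinv_0_lt_compat; rewrite /Rpower; exact: exp_pos.
set T := fun j => ell r ph (th delta n alpha j) - alpha * ell r ph (th delta n 1 j)
        + (alpha - 1) * ell r ph (th delta n 0 j).
have hsumT : sum_upto T n = L alpha + (- alpha) * L 1 + (alpha - 1) * L 0.
  rewrite /T /L; apply: sum_lin3.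
have hT : Rabs (sum_upto T n) <= K * (9 * PI).
  apply: (Rle_trans _ _ _ (sum_abs _ _)).
  set p := N * ph / (2 * PI).
  apply: (Rle_trans _ (sum_upto (fun j => K * (Q (INR j + - p) + Q (INR j + (- p - N)) + Q (INR j + (N - p)))) n)).
    apply: sum_le => j hj; rewrite /T.
    exact: (term_est alpha kappa M delta n ph j halpha hkappa hM0 (hd n j (elimT leP hj)) hj hph).
  rewrite sum_scal (sum_plus3 (fun j => Q (INR j + - p)) (fun j => Q (INR j + (- p - N))) (fun j => Q (INR j + (N - p)))).
  have := sum_Q (- p) n; have := sum_Q (- p - N) n; have := sum_Q (N - p) n.
  move=> h1 h2 h3; apply: Rmult_le_compat_l => //; lra.
have hA0 : Rabs (L 0 / 2) <= L0.
  rewrite -hA.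
  have := ref_sq kappa delta n (cos ph) (sin ph).
  have hcs : cos ph ^ 2 + sin ph ^ 2 = 1 by have := sin2_cos2 ph; rewrite /Rsqr; lra.
  move=> /(_ hcs) /(_ ltac:(rewrite -/r; lra)); rewrite -/r.
  have hrp := rho_pow kappa n hkappa; rewrite -/r in hrp.
  have hq0 : 0 <= r ^ n.+1 by apply: pow_le; lra.
  have hq1 : r ^ n.+1 <= Rmax (1/2) (exp (- kappa)) by [].
  have hM1 : Rmax (1/2) (exp (- kappa)) < 1 by rewrite /Rmax; case: Rle_dec; lra.
  set q := r ^ n.+1 in hq0 hq1 *.
  set A := absprod kappa 0 delta n (cos ph, sin ph).
  have hAp : 0 < A := Ap 0.
  move=> [h1 h2].
  have hA1 : 1 - q <= A.
    apply: Rsqr_incr_0_var; rewrite /Rsqr; try lra; nra.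
  have hA2 : A <= 1 + q.
    apply: Rsqr_incr_0_var; rewrite /Rsqr; try lra; nra.
  have l1 : ln c1 <= ln A by apply: ln_le'; rewrite /c1; lra.
  have l2 : ln A <= ln 2 by apply: ln_le'; lra.
  rewrite /L0; apply: Rabs_le; lra.
have hfin : Rabs (ln (Rn kappa alpha delta n (cos ph, sin ph))) <= B.
  rewrite hRn.
  have -> : L alpha / 2 - alpha * (L 1 / 2) = sum_upto T n / 2 + (1 - alpha) * (L 0 / 2).
    rewrite hsumT; field.
  apply: (Rle_trans _ _ _ (Rabs_triang _ _)).
  rewrite Rabs_mult /B.
  apply: Rplus_le_compat.
    rewrite /Rdiv Rabs_mult (Rabs_right (/ 2)); last lra.
    apply: Rmult_le_compat_r; lra.
  apply: Rmult_le_compat_l => //; apply: Rabs_pos.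
have h1 : - B <= ln (Rn kappa alpha delta n (cos ph, sin ph)) by move: hfin; split_Rabs; lra.
have h2 : ln (Rn kappa alpha delta n (cos ph, sin ph)) <= B by move: hfin; split_Rabs; lra.
rewrite -(exp_ln _ hRp).
split; exact: exp_le'.
Qed.
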